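(* Let $d>1$ and let $C\subseteq\{0,1\}^n$ be a maximum class of VC-dimension $d$. Then for every set $I\subseteq[n]$ of $d-1$ colors, the boundary $\partial C$ contains at least two $(d-1)$-cubes whose set of colors is $I$.
   Context: $C\subseteq\{0,1\}^n$ is maximum of VC-dimension $d$ if its VC-dimension is $d$ and $|C|=\sum_{i=0}^d\binom{n}{i}$. A $k$-cube in $C$ with colors $I$ ($|I|=k$) is a set of $2^k$ points of $C$ that agree outside the coordinates $I$ and take all $2^k$ values on $I$. The boundary $\partial C$ of a $d$-maximum class $C$ is the set of all $(d-1)$-cubes in $C$ that are faces of exactly one $d$-cube in $C$. *)

(* Defs.v *)
From mathcomp Require Import all_boot.
Set Implicit Arguments. Unset Strict Implicit. Unset Printing Implicit Defensive.

Definition point (n : nat) := {ffun 'I_n -> bool}.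

Definition shatters n (C : {set point n}) (S : {set 'I_n}) : Prop :=
  forall T : {set 'I_n}, T \subset S ->
    exists2 c, c \in C & forall i, i \in S -> c i = (i \in T).

Definition vc_dim n (C : {set point n}) (d : nat) : Prop :=
  (exists2 S : {set 'I_n}, shatters C S & #|S| = d) /\
  (forall S : {set 'I_n}, shatters C S -> #|S| <= d).

Definition maximum_class n (C : {set point n}) (d : nat) : Prop :=
  vc_dim C d /\ #|C| = \sum_(i < d.+1) 'C(n, i).

Definition cube_set n (I : {set 'I_n}) (x : point n) : {set point n} :=
  [set y : point n | [forall i, (i \notin I) ==> (y i == x i)]].

Definition cube_in n (C : {set point n}) (I : {set 'I_n}) (Q : {set point n}) : bool :=
  [exists x, Q == cube_set I x] && (Q \subset C).

Definition cofaces n (C : {set point n}) (d : nat) (Q : {set point n}) :=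
  [set Q' : {set point n} |
     [exists J : {set 'I_n}, (#|J| == d) && cube_in C J Q'] && (Q \subset Q')].

Definition boundary_cube n (C : {set point n}) (d : nat) (I : {set 'I_n})
    (Q : {set point n}) : Prop :=
  #|I| = d.-1 /\ cube_in C I Q /\ #|cofaces C d Q| = 1.

(* Main.v *)
Require Import Defs.
From mathcomp Require Import all_boot zify.
Set Implicit Arguments. Unset Strict Implicit. Unset Printing Implicit Defensive.

Lemma in_cube n (I : {set 'I_n}) (x y : point n) :
  reflect (forall i, i \notin I -> y i = x i) (y \in cube_set I x).
Proof.
rewrite inE; apply: (iffP forallP) => H i.
  by move=> Hi; apply/eqP; move: (H i); rewrite Hi.
by apply/implyP => Hi; apply/eqP; apply: H.
Qed.

Lemma cube_self n (I : {set 'I_n}) (x : point n) : x \in cube_set I x.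
Proof. by apply/in_cube. Qed.

Lemma cube_eq n (I : {set 'I_n}) (x y : point n) :
  x \in cube_set I y -> cube_set I x = cube_set I y.
Proof.
move/in_cube=> H; apply/setP=> z; apply/in_cube/in_cube => Hz i Hi.
  by rewrite Hz // H.
by rewrite Hz // H.
Qed.

Lemma cube_sub n (I J : {set 'I_n}) (x : point n) : I \subset J -> cube_set I x \subset cube_set J x.
Proof.
move=> IJ; apply/subsetP=> y /in_cube H; apply/in_cube=> i Hi; apply: H.
by apply: contra Hi; apply: (subsetP IJ).
Qed.

Definition flip n (j : 'I_n) (v : point n) : point n := [ffun i => (i == j) (+) v i].

Lemma cube_flip n (K : {set 'I_n}) j (v : point n) : j \in K -> cube_set K (flip j v) = cube_set K v.
Proof.
move=> jK; apply: cube_eq; apply/in_cube => i Hi; rewrite ffunE.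
by have -> : (i == j) = false by apply/eqP=> E; move: Hi; rewrite E jK.
Qed.

Lemma flipK n (j : 'I_n) (v : point n) : flip j (flip j v) = v.
Proof. by apply/ffunP=> i; rewrite !ffunE addbA addbb. Qed.

Fixpoint itf n (s : seq 'I_n) (v : point n) : point n :=
  if s is j :: s' then itf s' (flip j v) else v.

Lemma itfE n (s : seq 'I_n) (v : point n) c : itf s v c = odd (count_mem c s) (+) v c.
Proof.
elim: s v => [|j s IH] v /=; first by [].
rewrite IH ffunE oddD addbA [c == j]eq_sym.
by case: (j == c); case: (odd _).
Qed.

Lemma itf_cat n (s1 s2 : seq 'I_n) (v : point n) : itf (s1 ++ s2) v = itf s2 (itf s1 v).
Proof. by elim: s1 v => //= j s1 IH v; rewrite IH. Qed.

Lemma cube_uniq n (C : {set point n}) d (J : {set 'I_n}) (y y' : point n) :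
  (forall S, shatters C S -> #|S| <= d) -> #|J| = d ->
  cube_set J y \subset C -> cube_set J y' \subset C -> y' \in cube_set J y.
Proof.
move=> vc cJ Hy Hy'; apply/in_cube=> k kJ; apply/eqP; apply/negPn/negP=> nek.
suff : #|k |: J| <= d by rewrite cardsU1 kJ cJ ltnn.
apply: vc => T _.
pose z := if y k == (k \in T) then y else y'.
have zk : z k = (k \in T).
  rewrite /z; case: ifP => [/eqP //|/negbT H].
  by move: nek H; case: (y k); case: (k \in T); case: (y' k).
have Hz : cube_set J z \subset C by rewrite /z; case: ifP.
exists [ffun i => if i \in J then i \in T else z i].
  by apply: (subsetP Hz); apply/in_cube=> i Hi; rewrite ffunE (negbTE Hi).
move=> i; rewrite in_setU1 ffunE => /orP [/eqP -> | iJ].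
  by rewrite (negbTE kJ).
by rewrite iJ.
Qed.

Definition live n (A : {set 'I_n}) (C : {set point n}) :=
  forall c, c \in C -> forall i, i \notin A -> c i = false.
Definition zx n (x : 'I_n) (c : point n) : point n := [ffun i => if i == x then false else c i].
Definition Z0 n (C : {set point n}) x := zx x @: [set c in C | ~~ c x].
Definition Z1 n (C : {set point n}) x := zx x @: [set c in C | c x].
Definition phi k m := \sum_(i < k) 'C(m, i).

Lemma zx_inj n (x : 'I_n) (c c' : point n) : c x = c' x -> zx x c = zx x c' -> c = c'.
Proof.
move=> Hx /ffunP H; apply/ffunP=> i; have := H i; rewrite !ffunE.
by case: eqP => // ->.
Qed.

Lemma zx_x n (x : 'I_n) c : zx x c x = false.
Proof. by rewrite ffunE eqxx. Qed.

Lemma zx_ne n (x : 'I_n) c i : i != x -> zx x c i = c i.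
Proof. by rewrite ffunE => /negbTE ->. Qed.

Lemma card_split n (C : {set point n}) x : #|C| = #|Z0 C x| + #|Z1 C x|.
Proof.
rewrite /Z0 /Z1 !card_in_imset; last first.
- by move=> c c'; rewrite !inE => /andP[_ H1] /andP[_ H2]; apply: zx_inj;
    first by [rewrite H1 H2 | rewrite (negbTE H1) (negbTE H2)].
- by move=> c c'; rewrite !inE => /andP[_ H1] /andP[_ H2]; apply: zx_inj;
    first by [rewrite H1 H2 | rewrite (negbTE H1) (negbTE H2)].
rewrite -(cardsID [set c : point n | c x] C) addnC; congr (_ + _); apply: eq_card => c;
  by rewrite !inE andbC.
Qed.

Lemma Z0P n (C : {set point n}) x z :
  reflect (exists2 c, c \in C & c x = false /\ z = zx x c) (z \in Z0 C x).
Proof.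
apply: (iffP imsetP) => [[c] | [c Hc [H1 ->]]].
  by rewrite inE => /andP[Hc /negbTE H] ->; exists c.
by exists c => //; rewrite inE Hc H1.
Qed.

Lemma Z1P n (C : {set point n}) x z :
  reflect (exists2 c, c \in C & c x = true /\ z = zx x c) (z \in Z1 C x).
Proof.
apply: (iffP imsetP) => [[c] | [c Hc [H1 ->]]].
  by rewrite inE => /andP[Hc H] ->; exists c.
by exists c => //; rewrite inE Hc H1.
Qed.

Lemma ZU_mem n (C : {set point n}) x z :
  z \in Z0 C x :|: Z1 C x -> exists2 c, c \in C & z = zx x c.
Proof.
by rewrite inE => /orP[/Z0P [c Hc [_ ->]] | /Z1P [c Hc [_ ->]]]; exists c.
Qed.

Lemma live_ZU n (A : {set 'I_n}) C x : live A C -> live (A :\ x) (Z0 C x :|: Z1 C x).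
Proof.
move=> L z /ZU_mem [c Hc ->] i; rewrite !inE negb_and negbK => /orP[/eqP -> | Hi].
  by rewrite zx_x.
by rewrite ffunE; case: ifP => // _; apply: L.
Qed.

Lemma live_ZI n (A : {set 'I_n}) C x : live A C -> live (A :\ x) (Z0 C x :&: Z1 C x).
Proof.
move=> L z; rewrite inE => /andP[Hz _]; apply: (live_ZU L); by rewrite inE Hz.
Qed.

Lemma shat_x n (C : {set point n}) x S :
  (forall z, z \in C -> z x = false) -> shatters C S -> x \notin S.
Proof.
move=> H Sh; apply/negP=> xS; have [z Hz Hzs] := Sh S (subxx S).
by move: (Hzs x xS); rewrite H // xS.
Qed.

Lemma ZU_x n (C : {set point n}) x z : z \in Z0 C x :|: Z1 C x -> z x = false.
Proof. by move/ZU_mem=> [c _ ->]; rewrite zx_x. Qed.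

Lemma ZU_shat n (C : {set point n}) x S : shatters (Z0 C x :|: Z1 C x) S -> shatters C S.
Proof.
move=> Sh; have xS := shat_x (@ZU_x _ C x) Sh.
move=> T TS; have [z /ZU_mem [c Hc ->] Hz] := Sh T TS.
exists c => // i iS; rewrite -(Hz i iS) zx_ne //; apply: contraNneq xS => <-//.
Qed.

Lemma ZI_shat n (C : {set point n}) x S :
  shatters (Z0 C x :&: Z1 C x) S -> x \notin S /\ shatters C (x |: S).
Proof.
move=> Sh.
have xS : x \notin S.
  apply: (shat_x _ Sh) => z; rewrite inE => /andP[Hz _]; apply: (@ZU_x _ C x); by rewrite inE Hz.
split=> // T TS.
have [|z] := Sh (T :\ x).
  by apply/subsetP=> i; rewrite !inE => /andP[ix /(subsetP TS)]; rewrite !inE (negbTE ix).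
rewrite inE => /andP[/Z0P [c0 H0 [c0x E0]] /Z1P [c1 H1 [c1x E1]]] Hz.
exists (if x \in T then c1 else c0); first by case: ifP.
move=> i; rewrite in_setU1 => /orP[/eqP -> | iS].
  by case: ifP.
have ix : i != x by apply: contraNneq xS => <-.
have := Hz i iS; rewrite in_setD1 ix /= => <-.
by case: ifP => _; [rewrite E1 | rewrite E0]; rewrite zx_ne.
Qed.

Lemma phiS k m : phi k.+1 m.+1 = phi k.+1 m + phi k m.
Proof.
rewrite /phi !big_ord_recl !bin0 -addnA; congr (_ + _).
rewrite -big_split /=; apply: eq_bigr => i _.
by rewrite /bump /= binS.
Qed.

Lemma phi0 k : phi k.+1 0 = 1.
Proof.
rewrite /phi big_ord_recl bin0 big1 // => i _.

Qed.

Lemma phi1 m : phi 1 m = 1.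
Proof. by rewrite /phi big_ord1 bin0. Qed.

Lemma nonempty_shat0 n (C : {set point n}) c : c \in C -> shatters C set0.
Proof. by move=> Hc T _; exists c => // i; rewrite inE. Qed.

Lemma sauer n m : forall k (A : {set 'I_n}) (C : {set point n}), #|A| = m -> live A C ->
  (forall S, shatters C S -> #|S| != k) -> #|C| <= phi k m.
Proof.
elim: m => [|m IH] [|k] A C cA L NS.
- case: (set_0Vmem C) => [-> | [c Hc]]; first by rewrite cards0.
  by have := NS _ (nonempty_shat0 Hc); rewrite cards0.
- rewrite phi0; have A0 : A = set0 by apply/eqP; rewrite -cards_eq0 cA.
  have -> : C = [set [ffun=> false]] :&: C.
    apply/setP=> c; rewrite !inE; case Hc: (c \in C); rewrite ?andbF ?andbT //.
    apply/esym/eqP/ffunP=> i; rewrite ffunE; apply: L => //; by rewrite A0 inE.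
  by rewrite -(cards1 ([ffun=> false] : point n)) subset_leq_card // subsetIl.
- case: (set_0Vmem C) => [-> | [c Hc]]; first by rewrite cards0.
  by have := NS _ (nonempty_shat0 Hc); rewrite cards0.
- case: (set_0Vmem A) => [A0 | [x xA]]; first by move: cA; rewrite A0 cards0.
  have cA' : #|A :\ x| = m by move: cA; rewrite (cardsD1 x A) xA add1n => [[]].
  rewrite (card_split C x) -cardsUI phiS leq_add //.
  + apply: (IH k.+1 (A :\ x)) => //; first exact: live_ZU.
    by move=> S /ZU_shat; apply: NS.
  + apply: (IH k (A :\ x)) => //; first exact: live_ZI.
    move=> S /ZI_shat [xS /NS]; by rewrite cardsU1 xS.
Qed.

Lemma cube_exist n j : forall (A J : {set 'I_n}) (C : {set point n}), live A C ->
  (forall S, shatters C S -> #|S| != j.+1) -> phi j.+1 #|A| <= #|C| ->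
  J \subset A -> #|J| = j -> exists y, cube_set J y \subset C.
Proof.
elim: j => [|j IH] A J C L NS cC JA cJ.
- have J0 : J = set0 by apply/eqP; rewrite -cards_eq0 cJ.
  move: cC; rewrite phi1; case: (set_0Vmem C) => [-> | [c Hc] _]; first by rewrite cards0.
  exists c; apply/subsetP=> w /in_cube H.
  have -> : w = c by apply/ffunP=> i; apply: H; rewrite J0 inE.
  exact: Hc.
- case: (set_0Vmem J) => [J0 | [x xJ]]; first by move: cJ; rewrite J0 cards0.
  have xA : x \in A := subsetP JA x xJ.
  have cA : #|A| = #|A :\ x|.+1 by rewrite (cardsD1 x A) xA.
  have cJ' : #|J :\ x| = j by move: cJ; rewrite (cardsD1 x J) xJ add1n => [[]].
  have U := @sauer n #|A :\ x| j.+2 (A :\ x) (Z0 C x :|: Z1 C x) erefl (@live_ZU _ A C x L)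
    (fun S H => NS S (ZU_shat H)).
  have [y Hy] : exists y, cube_set (J :\ x) y \subset Z0 C x :&: Z1 C x.
    apply: (IH (A :\ x)) => //.
    + exact: live_ZI.
    + move=> S /ZI_shat [xS /NS]; by rewrite cardsU1 xS.
    + move: cC; rewrite cA phiS (card_split C x) -cardsUI => H.
      rewrite -(leq_add2l #|Z0 C x :|: Z1 C x|); apply: leq_trans H.
      by rewrite leq_add2r.
    + by apply/subsetP=> i; rewrite !inE => /andP[-> /(subsetP JA)].
  have yx : y x = false.
    have := subsetP Hy y (cube_self _ _); rewrite inE => /andP[H _].
    by apply: (@ZU_x _ C x); rewrite inE H.
  exists y; apply/subsetP=> w /in_cube Hw.
  have : zx x w \in Z0 C x :&: Z1 C x.
    apply: (subsetP Hy); apply/in_cube=> i; rewrite in_setD1 negb_and negbK.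
    case/orP=> [/eqP -> | Hi]; first by rewrite zx_x yx.
    have ix : i != x by apply: contraNneq Hi => ->; rewrite xJ.
    by rewrite zx_ne // Hw.
  rewrite inE => /andP[/Z0P [c0 H0 [c0x E0]] /Z1P [c1 H1 [c1x E1]]].
  case Ewx: (w x).
    have <- // : c1 = w.
    by apply: (@zx_inj _ x); [rewrite c1x Ewx | rewrite -E1].
  have <- // : c0 = w.
  by apply: (@zx_inj _ x); [rewrite c0x Ewx | rewrite -E0].
Qed.

Lemma leaf_boundary n (C : {set point n}) d (I : {set 'I_n}) (x : point n) (j0 : 'I_n) :
  1 < d -> #|I| = d.-1 -> j0 \notin I -> cube_set (j0 |: I) x \subset C ->
  (forall j, j \notin I -> cube_set (j |: I) x \subset C -> j = j0) ->
  boundary_cube C d I (cube_set I x).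
Proof.
move=> d1 cI j0I Hj0 Huniq.
have cJ : forall j, j \notin I -> #|j |: I| = d.
  by move=> j jI; rewrite cardsU1 jI cI add1n prednK // ltnW.
split=> //; split.
  apply/andP; split; first by apply/existsP; exists x.
  exact: subset_trans (cube_sub x (subsetU1 j0 I)) Hj0.
suff -> : cofaces C d (cube_set I x) = [set cube_set (j0 |: I) x] by rewrite cards1.
apply/setP=> Q'; rewrite !inE; apply/idP/idP.
- case/andP=> /existsP [J /andP [/eqP cJd /andP [/existsP [y /eqP EQ] QC]]] sub.
  have xJ : x \in cube_set J y by rewrite -EQ; apply: (subsetP sub); apply: cube_self.
  rewrite EQ -(cube_eq xJ) in QC sub *.
  have IJ : I \subset J.
    apply/subsetP=> i iI; apply/negPn/negP=> iJ.
    have : flip i x \in cube_set J x.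
      apply: (subsetP sub); rewrite -(cube_flip x iI); apply: cube_self.
    by move/in_cube/(_ i iJ); rewrite ffunE eqxx; case: (x i).
  have : #|J :\: I| == 1.
    rewrite cardsD (setIidPr IJ) cJd cI; apply/eqP; lia.
  case/cards1P=> j Ej.
  have jJI : j \in J :\: I by rewrite Ej set11.
  have EJ : J = j |: I.
    apply/setP=> i; rewrite in_setU1; apply/idP/idP.
      move=> iJ; case iI: (i \in I); first by rewrite orbT.
      have : i \in J :\: I by rewrite inE iI iJ.
      by rewrite Ej inE => ->.
    case/orP=> [/eqP -> | iI]; first by move: jJI; rewrite inE => /andP[].
    exact: (subsetP IJ).
  have jI : j \notin I by move: jJI; rewrite inE => /andP[].
  rewrite EJ in QC *; by rewrite (Huniq j jI QC).
- move/eqP=> ->; apply/andP; split; last exact: cube_sub (subsetU1 j0 I).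
  apply/existsP; exists (j0 |: I); rewrite cJ // eqxx /=.
  by apply/andP; split=> //; apply/existsP; exists x.
Qed.

Fixpoint pedges n (C : {set point n}) (I : {set 'I_n}) (v : point n) (s : seq 'I_n) : bool :=
  if s is j :: s' then (cube_set (j |: I) v \subset C) && pedges C I (flip j v) s' else true.

Definition valid n (C : {set point n}) (I : {set 'I_n}) (v : point n) (s : seq 'I_n) :=
  [&& uniq s, all (fun j => j \notin I) s & pedges C I v s].

Lemma pedges_cat n C I (v : point n) s1 s2 :
  pedges C I v (s1 ++ s2) = pedges C I v s1 && pedges C I (itf s1 v) s2.
Proof. by elim: s1 v => //= j s1 IH v; rewrite IH andbA. Qed.

Lemma itf_in n (s : seq 'I_n) (v : point n) c : uniq s -> c \in s -> itf s v c = ~~ v c.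
Proof. by move=> u cs; rewrite itfE count_uniq_mem // cs. Qed.

Lemma itf_notin n (s : seq 'I_n) (v : point n) c : c \notin s -> itf s v c = v c.
Proof. by move=> cs; rewrite itfE (count_memPn cs). Qed.

Lemma split_in (T : eqType) (s : seq T) j : j \in s -> exists p1 p2, s = p1 ++ j :: p2.
Proof. by case/splitPr=> p1 p2; exists p1, p2. Qed.

Unset Implicit Arguments.

Theorem theorem2 (n d : nat) (C : {set point n}) :
  1 < d -> maximum_class C d ->
  forall I : {set 'I_n}, #|I| = d.-1 ->
    exists Q1 Q2 : {set point n},
      [/\ Q1 != Q2, boundary_cube C d I Q1 & boundary_cube C d I Q2].
Proof.
move=> d1 [[[S0 shS0 cS0] vcb] cardC] I cI.
have NS : forall S, shatters C S -> #|S| != d.+1.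
  by move=> S /vcb H; apply/eqP=> E; move: H; rewrite E ltnn.
have dn : d <= n by rewrite -cS0; apply: leq_trans (max_card _) _; rewrite card_ord.
have cubeJ : forall J : {set 'I_n}, #|J| = d -> exists y, cube_set J y \subset C.
  move=> J cJ; apply: (@cube_exist n d setT J C) => //.
  - by move=> c _ i; rewrite inE.
  - by rewrite cardsT card_ord cardC.
have cJ : forall j, j \notin I -> #|j |: I| = d.
  by move=> j jI; rewrite cardsU1 jI cI add1n prednK // ltnW.
have [j0 j0I] : exists j, j \notin I.
  have : 0 < #|~: I| by rewrite cardsCs setCK card_ord cI; lia.
  by case/card_gt0P => j; rewrite inE => ?; exists j.
have [y Hy] := cubeJ _ (cJ j0 j0I).
pose P k := [exists v : point n, exists t : k.-tuple 'I_n, valid C I v t].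
have P1 : P 1.
  apply/existsP; exists y; apply/existsP; exists [tuple j0].
  by rewrite /valid /= j0I Hy.
have Pb : forall k, P k -> k <= n.
  move=> k /existsP [v /existsP [t /and3P [u _ _]]].
  by rewrite -(size_tuple t) -(card_uniqP u); apply: leq_trans (max_card _) _; rewrite card_ord.
case: (ex_maxnP (ex_intro P 1 P1) Pb) => K PK Kmax.
have maxl : forall v s, valid C I v s -> size s <= K.
  move=> v s Vs; apply: Kmax; apply/existsP; exists v; apply/existsP; exists (in_tuple s); done.
have [v [s [Vs sK]]] : exists v s, valid C I v s /\ size s = K.
  by case/existsP: PK => v /existsP [t Vt]; exists v, t; rewrite size_tuple.
have K1 : 0 < K := Kmax 1 P1.
move: Vs => /and3P [us al ps].
have edge : forall p1 j p2, s = p1 ++ j :: p2 -> cube_set (j |: I) (itf p1 v) \subset C.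
  by move=> p1 j p2 E; move: ps; rewrite E pedges_cat /= => /andP[_ /andP[H _]].
have sameC : forall j a b, j \notin I -> cube_set (j |: I) a \subset C ->
    cube_set (j |: I) b \subset C -> b \in cube_set (j |: I) a.
  by move=> j a b jI; apply: cube_uniq vcb (cJ j jI).
have [j1 [s2 Es]] : exists j1 s2, s = j1 :: s2.
  move: sK; case: s {us al ps edge} => [|j1 s2] sK; last by exists j1, s2.
  by rewrite -sK in K1.
have j1I : j1 \notin I by move: al; rewrite Es /= => /andP[].
exists (cube_set I v), (cube_set I (itf s v)); split.
- apply/eqP=> E; have : itf s v \in cube_set I v by rewrite E cube_self.
  move/in_cube/(_ j1 j1I); rewrite itf_in; [by case: (v j1) | done | by rewrite Es mem_head].
- apply: (@leaf_boundary _ _ _ _ _ j1) => //.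
    by move: ps; rewrite Es /= => /andP[].
  move=> j jI Hj; case js: (j \in s).
    have [p1 [p2 E]] := split_in js.
    have M := sameC j _ _ jI (edge _ _ _ E) Hj.
    case: p1 E M => [|c p3] E M; first by move: E; rewrite Es => [[]].
    have cs : c \in s by rewrite E inE eqxx.
    have cI' : c \notin I by move/allP: al => /(_ c cs).
    have cj : c != j.
      by move: us; rewrite E cat_uniq => /and3P[_ H _]; apply: contraNneq H => ->; rewrite /= mem_head.
    have u3 : uniq (c :: p3) by move: us; rewrite E cat_uniq => /and3P[].
    move/in_cube: M => /(_ c); rewrite in_setU1 (negbTE cj) (negbTE cI') /= => /(_ isT).
    change (v c = itf (c :: p3) v c -> j = j1).
    by rewrite itf_in ?mem_head //; case: (v c).
  have := maxl (flip j v) (j :: s).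
  rewrite /valid /= js us jI al cube_flip ?setU11 // Hj flipK ps sK ltnn.
  by move=> /(_ isT).
- have [s1 [jl Es']] : exists s1 jl, s = rcons s1 jl.
    by exists (belast j1 s2), (last j1 s2); rewrite Es lastI.
  have jlI : jl \notin I by move: al; rewrite Es' all_rcons => /andP[].
  apply: (@leaf_boundary _ _ _ _ _ jl) => //.
    rewrite Es' -cats1 itf_cat /= cube_flip ?setU11 //.
    by apply: (edge s1 jl [::]); rewrite Es' cats1.
  move=> j jI Hj; case js: (j \in s).
    have [p1 [p2 E]] := split_in js.
    have M := sameC j _ _ jI (edge _ _ _ E) Hj.
    case: p2 E M => [|c p3] E M.
      by move: E; rewrite Es' cats1 => /(f_equal (last j)); rewrite !last_rcons.
    have cs : c \in s by rewrite E mem_cat !inE eqxx !orbT.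
    have cI' : c \notin I by move/allP: al => /(_ c cs).
    have cj : c != j.
      by move: us; rewrite E cat_uniq => /and3P[_ _ /= /andP[H _]]; apply: contraNneq H => ->; rewrite mem_head.
    have cp1 : c \notin p1.
      by move: us; rewrite E cat_uniq => /and3P[_ H _]; apply: contra H => H; rewrite /= H orbT.
    move/in_cube: M => /(_ c); rewrite in_setU1 (negbTE cj) (negbTE cI') /= => /(_ isT).
    by rewrite itf_in // itf_notin //; case: (v c).
  have := maxl v (rcons s j).
  rewrite /valid rcons_uniq js us all_rcons jI al -cats1 pedges_cat ps /= Hj.
  by rewrite size_cat /= sK addn1 ltnn => /(_ isT).
Qed.
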